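(* Let $m,d,R\ge1$ be integers, $0<\lambda<\sigma<1$, $L_A,L_C,L_Z\ge0$, $\eta^0>0$, $c^*\ge0$, $D\ge0$, and let $\omega\in[0,\bar\omega(\sigma))$ where $\bar\omega(\sigma)=\frac{\sigma}{R}\cdot\frac{\sigma-\lambda}{\sigma-\lambda+2L_AL_Z[R\psi]^2}$ and $\psi=\max\{1,(2L_C)^{R-1}\}$. Define $$V_0=\max\{c^*,D\}+\frac{L_A\psi\sqrt{md}\,R^2\eta^0}{\sigma-\lambda}\cdot\frac{1+\frac{R\omega}{\sigma}[(1+L_C\sigma)\psi-1]}{1-\omega/\bar\omega(\sigma)},$$ $F^0=0$ and, for $s\in[R]$, $$F^s=\frac{\sqrt{md}\,\eta^0(1+L_C\sigma)+2L_ZV_0}{\sigma-\omega}\sum_{s'=0}^{s-1}\Big(\frac{2L_C}{1-\omega/\sigma}\Big)^{s'}.$$ Let $\tilde L_A=L_A\sum_{s=0}^{R-1}L_C^s$ and $\mathbf F=(F^1,\dots,F^R)$. Then $$V_0\ge\max\Big\{D,\ \frac{\sqrt{md}\,R\eta^0+\omega\sum_{s=1}^RF^s}{\sigma-\lambda}\,\tilde L_A\Big\},$$ and for every $s\in[R]$, $$F^s\ge\max\Big\{L_Zc^*+L_C\sqrt{md}\,\eta^0+L_C(1+\omega)F^{s-1},\ \frac{\sqrt{md}\,\eta^0(1+L_C\sigma)+L_C\sigma(1+\omega)F^{s-1}+L_Z(1+\sigma)V_0}{\sigma-\omega}\Big\}.$$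
   Context: All quantities are real numbers; $[R]=\{1,\dots,R\}$. Note that $\omega<\bar\omega(\sigma)\le\sigma/R$. *)

(* Defs.v *)
From Stdlib Require Import Reals Lra Lia.
Open Scope R_scope.

Fixpoint rsum (n : nat) (f : nat -> R) : R :=
  match n with
  | O => 0
  | S n' => rsum n' f + f n'
  end.

Definition psi (LC : R) (Rn : nat) : R := Rmax 1 ((2 * LC) ^ (Rn - 1)).

Definition omega_bar (Rn : nat) (lam sig LA LC LZ : R) : R :=
  sig / INR Rn * ((sig - lam) / (sig - lam + 2 * LA * LZ * (INR Rn * psi LC Rn) ^ 2)).

Definition V0 (m d Rn : nat) (lam sig LA LC LZ eta0 cstar D omega : R) : R :=
  Rmax cstar D
  + (LA * psi LC Rn * sqrt (INR m * INR d) * (INR Rn) ^ 2 * eta0 / (sig - lam))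
    * ((1 + INR Rn * omega / sig * ((1 + LC * sig) * psi LC Rn - 1))
       / (1 - omega / omega_bar Rn lam sig LA LC LZ)).

Definition Fs (m d Rn : nat) (lam sig LA LC LZ eta0 cstar D omega : R) (s : nat) : R :=
  match s with
  | O => 0
  | S _ =>
    (sqrt (INR m * INR d) * eta0 * (1 + LC * sig)
       + 2 * LZ * V0 m d Rn lam sig LA LC LZ eta0 cstar D omega) / (sig - omega)
    * rsum s (fun k => (2 * LC / (1 - omega / sig)) ^ k)
  end.

Definition LAtilde (LA LC : R) (Rn : nat) : R := LA * rsum Rn (fun s => LC ^ s).

(* Main.v *)
Require Import Defs.
From Stdlib Require Import Reals Lra Lia.
Open Scope R_scope.

Lemma rsum_ext n f g : (forall k, (k<n)%nat -> f k = g k) -> rsum n f = rsum n g.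
Proof. induction n; simpl; intros H; auto. rewrite IHn, H; auto. Qed.
Lemma rsum_le n f g : (forall k, (k<n)%nat -> f k <= g k) -> rsum n f <= rsum n g.
Proof. induction n; simpl; intros H; [lra|]. pose proof (H n ltac:(lia)). pose proof (IHn ltac:(intros; apply H; lia)). lra. Qed.
Lemma rsum_nonneg n f : (forall k, 0 <= f k) -> 0 <= rsum n f.
Proof. induction n; simpl; intros H; [lra|]. pose proof (H n). pose proof (IHn H). lra. Qed.
Lemma rsum_const n c : rsum n (fun _ => c) = INR n * c.
Proof. induction n; simpl rsum; [simpl; lra|]. rewrite IHn, S_INR. lra. Qed.
Lemma rsum_mono n m f : (forall k, 0<= f k) -> (n <= m)%nat -> rsum n f <= rsum m f.
Proof. intros H Hnm. induction Hnm; [lra|]. simpl. pose proof (H m). lra. Qed.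
Lemma geom_rec n r : rsum (S n) (fun k => r^k) = 1 + r * rsum n (fun k => r^k).
Proof. induction n; [simpl; lra|]. cbn [rsum] in *. replace (r^(S n)) with (r*r^n) by (simpl; ring). rewrite Rmult_plus_distr_l. lra. Qed.
Lemma bernoulli n x : 0<=x<=1 -> 1 - INR n * x <= (1-x)^n.
Proof. intros Hx. induction n; [simpl; lra|]. rewrite S_INR. simpl pow.
  pose proof (pos_INR n). nra. Qed.
Lemma pow_le_psi LC Rn k : 0<=LC -> (k < Rn)%nat -> (2*LC)^k <= psi LC Rn.
Proof. intros H Hk. unfold psi. destruct (Rle_dec (2*LC) 1).
  - eapply Rle_trans; [|apply Rmax_l]. rewrite <- (pow1 k). apply pow_incr; lra.
  - eapply Rle_trans; [|apply Rmax_r]. apply Rle_pow; [lra|lia]. Qed.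

Lemma fin_alg (u Rr ps a t LCs LZ M E W B z : R) :
  0 <= t -> 0 <= M -> t*(1+z) < 1 ->
  W = a*(1+LCs) + 2*LZ*(M+E) ->
  E*(1-t*(1+z)) = B*(1+t*(ps*(1+LCs)-1)) ->
  B = u*ps*a*Rr^2 -> z = 2*u*LZ*Rr^2*ps^2 -> 0 <= z ->
  u*Rr*ps*(a*Rr + t*Rr*ps*W/(1-t)) <= M+E.
Proof.
  intros Ht HM Hy HW HE HB Hz Hz0.
  assert (Ht1 : t < 1) by nra.
  apply Rmult_le_reg_r with (1-t); [lra|].
  assert (Hq : t*Rr*ps*W/(1-t)*(1-t) = t*Rr*ps*W) by (field; lra).
  assert (Hexp : u*Rr*ps*(a*Rr + t*Rr*ps*W/(1-t))*(1-t)
     = u*Rr*ps*a*Rr*(1-t) + u*Rr*ps*(t*Rr*ps*W/(1-t)*(1-t))) by ring.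
  rewrite Hexp, Hq.
  assert (0 <= M*(1-t*(1+z))) by (apply Rmult_le_pos; lra).
  subst W B z. nra.
Qed.
Lemma Rdiv_le_0_compat a b : 0 <= a -> 0 < b -> 0 <= a / b.
Proof. intros. unfold Rdiv. apply Rmult_le_pos; auto. left; apply Rinv_0_lt_compat; auto. Qed.

Theorem lemma4 (m d Rn : nat) (lam sig LA LC LZ eta0 cstar D omega : R) :
  (1 <= m)%nat -> (1 <= d)%nat -> (1 <= Rn)%nat ->
  0 < lam -> lam < sig -> sig < 1 ->
  0 <= LA -> 0 <= LC -> 0 <= LZ ->
  0 < eta0 -> 0 <= cstar -> 0 <= D ->
  0 <= omega -> omega < omega_bar Rn lam sig LA LC LZ ->
  let V := V0 m d Rn lam sig LA LC LZ eta0 cstar D omega in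
  let F := Fs m d Rn lam sig LA LC LZ eta0 cstar D omega in
  let smd := sqrt (INR m * INR d) in
  V >= Rmax D ((smd * INR Rn * eta0 + omega * rsum Rn (fun k => F (S k)))
                 / (sig - lam) * LAtilde LA LC Rn)
  /\ (forall s : nat, (1 <= s <= Rn)%nat ->
      F s >= Rmax (LZ * cstar + LC * smd * eta0 + LC * (1 + omega) * F (s - 1)%nat)
                  ((smd * eta0 * (1 + LC * sig) + LC * sig * (1 + omega) * F (s - 1)%nat
                    + LZ * (1 + sig) * V) / (sig - omega))).
Proof.
  intros Hm Hd HR Hl Hls Hs1 HLA HLC HLZ He Hc HD Ho Hob V F smd.
  assert (Hsmd : 0 <= smd) by apply sqrt_pos.
  set (a := smd * eta0).
  assert (Ha : 0 <= a) by (unfold a; nra).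
  assert (HRr : 1 <= INR Rn) by (apply (le_INR 1); lia).
  set (Rr := INR Rn) in *.
  set (ps := psi LC Rn).
  assert (Hps : 1 <= ps) by apply Rmax_l.
  assert (Hs : 0 < sig) by lra.
  set (u := LA / (sig - lam)).
  assert (Hu : 0 <= u) by (unfold u; apply Rdiv_le_0_compat; lra).
  set (z := 2*u*LZ*Rr^2*ps^2).
  assert (Hz : 0 <= z) by (unfold z; assert (0 <= u*LZ) by nra; assert (0<= Rr^2*ps^2) by nra; nra).
  set (x := omega / sig).
  assert (Hx : 0 <= x) by (unfold x; apply Rdiv_le_0_compat; lra).
  set (t := Rr * x).
  assert (Ht : 0 <= t) by (unfold t; nra).
  assert (Hob0 : 0 < omega_bar Rn lam sig LA LC LZ).
  { unfold omega_bar. fold ps Rr. apply Rmult_lt_0_compat. apply Rdiv_lt_0_compat; lra.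
    apply Rdiv_lt_0_compat. lra.
    assert (0 <= 2*LA*LZ*(Rr*ps)^2) by (apply Rmult_le_pos; [nra| apply pow2_ge_0]). lra. }
  assert (Hyid : omega / omega_bar Rn lam sig LA LC LZ = t*(1+z)).
  { unfold omega_bar, t, x, z, u. fold ps Rr. field.
    assert (0 <= 2*LA*LZ*(Rr*ps)^2) by (apply Rmult_le_pos; [nra| apply pow2_ge_0]).
    repeat split; try lra. }
  assert (Hy : t*(1+z) < 1).
  { rewrite <- Hyid. apply (Rmult_lt_reg_r (omega_bar Rn lam sig LA LC LZ)); auto.
    unfold Rdiv. rewrite Rmult_assoc, Rinv_l; lra. }
  assert (Ht1 : t < 1) by nra.
  assert (Hxt : x <= t) by (unfold t; nra).
  assert (Hos : omega < sig).
  { assert (x < 1) by lra. unfold x in H. apply (Rmult_lt_reg_r (/sig)).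
    apply Rinv_0_lt_compat; lra. rewrite Rinv_r; lra. }
  set (M := Rmax cstar D).
  assert (HMc : cstar <= M) by apply Rmax_l.
  assert (HMD : D <= M) by apply Rmax_r.
  set (B := LA * ps * smd * Rr ^ 2 * eta0 / (sig - lam)).
  assert (HB : B = u*ps*a*Rr^2) by (unfold B, u, a; field; lra).
  assert (HB0 : 0 <= B) by (rewrite HB; assert (0 <= u*ps) by nra; assert (0<=a*Rr^2) by nra; nra).
  set (N := 1 + Rr * omega / sig * ((1 + LC * sig) * ps - 1)).
  assert (HN : N = 1+t*(ps*(1+LC*sig)-1)) by (unfold N, t, x; field; lra).
  set (E := B * (N / (1 - t*(1+z)))).
  assert (HVE : V = M + E).
  { unfold V, V0, E. fold ps Rr M. rewrite <- Hyid. unfold B, N. fold smd. reflexivity. }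
  assert (HN1 : 1 <= N) by (rewrite HN; assert (0 <= t*(ps*(1+LC*sig)-1)) by (apply Rmult_le_pos; [lra|]; assert (0 <= LC*sig) by (apply Rmult_le_pos; lra); assert (0 <= ps*(LC*sig)) by (apply Rmult_le_pos; lra); nra); lra).
  assert (HE0 : 0 <= E) by (unfold E; apply Rmult_le_pos; auto; apply Rdiv_le_0_compat; lra).
  assert (HEid : E*(1-t*(1+z)) = B*N) by (unfold E; field; lra).
  assert (HV0 : M <= V) by lra.
  set (r := 2*LC/(1-omega/sig)).
  set (g := fun k : nat => r^k).
  set (K := (smd * eta0 * (1 + LC * sig) + 2 * LZ * V) / (sig - omega)).
  assert (HF : forall n, F n = K * rsum n g).
  { intros [|n]; [simpl; ring | reflexivity]. }
  assert (Hr : 0 <= r) by (unfold r; fold x; apply Rdiv_le_0_compat; lra).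
  assert (HK : 0 <= K) by (unfold K; fold a; apply Rdiv_le_0_compat; [|lra];
    assert (0 <= LC*sig) by (apply Rmult_le_pos; lra); assert (0 <= LZ*V) by (apply Rmult_le_pos; lra); nra).
  assert (HW : K*(sig-omega) = a*(1+LC*sig)+2*LZ*V) by (unfold K; fold a; field; lra).
  set (W := a*(1+LC*sig)+2*LZ*V) in *.
  assert (HW0 : 0 <= W) by (rewrite <- HW; apply Rmult_le_pos; lra).
  split.
  - apply Rle_ge, Rmax_lub; [lra|].
    assert (Hx1 : x < 1) by lra.
    assert (HT : rsum Rn (fun k => LC^k) <= Rr*ps).
    { unfold Rr. rewrite <- rsum_const. apply rsum_le. intros k Hk.
      eapply Rle_trans; [apply pow_incr; split; [exact HLC| ]|apply pow_le_psi; auto].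
      lra. }
    assert (HT0 : 0 <= rsum Rn (fun k => LC^k)) by (apply rsum_nonneg; intros; apply pow_le; auto).
    assert (Hrx : r*(1-x) = 2*LC) by (unfold r; fold x; field; lra).
    assert (HSR : rsum Rn g <= Rr * (ps*(1-x)/(1-t))).
    { unfold Rr. rewrite <- rsum_const. apply rsum_le. intros k Hk. unfold g.
      apply (Rmult_le_reg_r (1-t)); [lra|].
      unfold Rdiv. rewrite Rmult_assoc, Rinv_l by lra. rewrite Rmult_1_r.
      assert (Hb : 1 - t <= (1-x)^(S k)).
      { eapply Rle_trans; [|apply bernoulli; lra].
        assert (INR (S k) <= Rr) by (unfold Rr; apply le_INR; lia).
        unfold t. nra. }
      assert (Hrk : 0 <= r^k) by (apply pow_le; auto).
      assert (Heq : r^k*(1-x)^(S k) = (2*LC)^k*(1-x)).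
      { rewrite <- Hrx, Rpow_mult_distr. simpl pow. ring. }
      assert (H2 : (2*LC)^k <= ps) by (apply pow_le_psi; auto).
      assert (r^k*(1-t) <= r^k*(1-x)^(S k)) by (apply Rmult_le_compat_l; auto).
      nra. }
    assert (HSR0 : 0 <= rsum Rn g) by (apply rsum_nonneg; intros; unfold g; apply pow_le; auto).
    assert (HSF : rsum Rn (fun k => F (S k)) <= Rr * (K * rsum Rn g)).
    { unfold Rr. rewrite <- rsum_const. apply rsum_le. intros k Hk. rewrite HF.
      apply Rmult_le_compat_l; auto. apply rsum_mono; [intros; unfold g; apply pow_le; auto| lia]. }
    assert (HSF0 : 0 <= rsum Rn (fun k => F (S k))).
    { apply rsum_nonneg. intros k. rewrite HF. apply Rmult_le_pos; auto.
      apply rsum_nonneg; intros; unfold g; apply pow_le; auto. }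
    set (SF := rsum Rn (fun k => F (S k))) in *.
    set (SR := rsum Rn g) in *.
    assert (HoK : omega*K*(1-x) = x*W).
    { rewrite <- HW. unfold x. field. lra. }
    assert (HQ : omega*SF <= t*Rr*ps*W/(1-t)).
    { apply Rle_trans with (omega*(Rr*(K*SR))); [apply Rmult_le_compat_l; lra|].
      apply (Rmult_le_reg_r ((1-x)*(1-t))); [apply Rmult_lt_0_compat; lra|].
      unfold Rdiv. replace (t * Rr * ps * W * / (1 - t) * ((1 - x) * (1 - t)))
        with (t*Rr*ps*W*(1-x)) by (field; lra).
      replace (omega * (Rr * (K * SR)) * ((1 - x) * (1 - t)))
        with (Rr*(omega*K*(1-x))*(SR*(1-t))) by ring.
      rewrite HoK.
      assert (SR*(1-t) <= Rr*ps*(1-x)).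
      { apply (Rmult_le_reg_r (/(1-t))). apply Rinv_0_lt_compat; lra.
        rewrite Rmult_assoc, Rinv_r, Rmult_1_r by lra. lra. }
      assert (0 <= Rr*(x*W)) by (apply Rmult_le_pos; [lra|apply Rmult_le_pos; lra]).
      apply Rle_trans with (Rr*(x*W)*(Rr*ps*(1-x))); [apply Rmult_le_compat_l; lra|].
      unfold t. right; ring. }
    assert (HQ0 : 0 <= omega*SF) by (apply Rmult_le_pos; lra).
    unfold LAtilde.
    replace ((smd * Rr * eta0 + omega * SF) / (sig - lam) * (LA * rsum Rn (fun s : nat => LC ^ s)))
      with (u * rsum Rn (fun s : nat => LC ^ s) * (a*Rr + omega*SF)) by (unfold u, a; field; lra).
    apply Rle_trans with (u*(Rr*ps)*(a*Rr + t*Rr*ps*W/(1-t))).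
    { apply Rmult_le_compat; try lra.
      - apply Rmult_le_pos; lra.
      - assert (0 <= a*Rr) by (apply Rmult_le_pos; lra). lra.
      - apply Rmult_le_compat_l; lra. }
    rewrite HVE. replace (u*(Rr*ps)*(a*Rr + t*Rr*ps*W/(1-t))) with
      (u*Rr*ps*(a*Rr + t*Rr*ps*W/(1-t))) by ring.
    apply (fin_alg u Rr ps a t (LC*sig) LZ M E W B z); auto.
    all: try lra.
    all: try (unfold W; rewrite HVE; ring).
    all: try (rewrite HEid, HN; ring).
  - intros s Hss. destruct s as [|s']; [lia|].
    replace (S s' - 1)%nat with s' by lia.
    rewrite !HF. unfold g. rewrite geom_rec. fold g.
    assert (HP : 0 <= rsum s' g) by (apply rsum_nonneg; intros; unfold g; apply pow_le; auto).
    set (P := rsum s' g) in *.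
    assert (HFp : 0 <= K*P) by (apply Rmult_le_pos; auto).
    assert (Hreq : r*(sig-omega) = 2*LC*sig) by (unfold r; field; lra).
    assert (HKeq : K*(sig-omega) = a*(1+LC*sig)+2*LZ*V) by (unfold K; fold a; field; lra).
    replace (K*(1+r*P)) with (K + r*(K*P)) by ring.
    set (Fp := K*P) in *.
    apply Rle_ge. apply Rmax_lub.
    + assert (HK1 : LZ*cstar + LC*a <= K).
      { apply (Rmult_le_reg_r (sig-omega)); [lra|]. rewrite HKeq.
        assert (LZ*cstar <= LZ*V) by (apply Rmult_le_compat_l; lra).
        assert (0 <= LZ*cstar) by (apply Rmult_le_pos; lra).
        assert (0 <= LC*a) by (apply Rmult_le_pos; lra).
        assert (0 <= LZ*V) by (apply Rmult_le_pos; lra).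
        nra. }
      assert (Hr1 : LC*(1+omega) <= r).
      { apply (Rmult_le_reg_r (sig-omega)); [lra|]. rewrite Hreq.
        assert (0 <= LC*omega) by (apply Rmult_le_pos; lra).
        assert (0 <= LC*omega*sig) by (apply Rmult_le_pos; lra).
        nra. }
      assert (LC*(1+omega)*Fp <= r*Fp) by (apply Rmult_le_compat_r; auto).
      unfold a in HK1. lra.
    + apply (Rmult_le_reg_r (sig-omega)); [lra|].
      unfold Rdiv. rewrite Rmult_assoc, Rinv_l by lra. rewrite Rmult_1_r.
      rewrite Rmult_plus_distr_r, HKeq.
      replace (r*Fp*(sig-omega)) with (r*(sig-omega)*Fp) by ring. rewrite Hreq. fold a.
      assert (0 <= LC*sig*Fp) by (apply Rmult_le_pos; [apply Rmult_le_pos|]; lra).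
      assert (0 <= LZ*V) by (apply Rmult_le_pos; lra).
      assert (LC*sig*(1+omega)*Fp <= 2*LC*sig*Fp) by nra.
      assert (LZ*(1+sig)*V <= 2*LZ*V) by nra.
      lra.
Qed.
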